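(* Let $k\ge 0$ and $n>2k+1$ be integers, and let $\sigma$ be a maximal simplex of $\mathrm{VR}(\mathbb{Z}^2;k)$. Then $\pi_n(\sigma)$ is a maximal simplex of $\mathrm{VR}(T_{n,n};k)$.
   Context: $\mathbb{Z}^2$ carries the $l^1$ metric. $T_{n,n}=\mathbb{Z}^2/(n\mathbb{Z}\times n\mathbb{Z})$ with quotient map $\pi_n$ (reduction of both coordinates mod $n$) and quotient metric $d([x],[y])=\min\{d(x',y'): \pi_n(x')=[x],\pi_n(y')=[y]\}$. $\mathrm{VR}(X;r)$ is the simplicial complex on vertex set $X$ whose simplices are the finite nonempty subsets of diameter at most $r$; a maximal simplex is one not properly contained in another simplex. *)

(* Defs.v *)
From HB Require Import structures.
From mathcomp Require Import all_boot all_order all_algebra.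
From mathcomp Require Import finmap.
Unset Printing Implicit Defensive.
Import Order.TTheory GRing.Theory Num.Theory.

Local Open Scope fset_scope.

Definition Z2 := (int * int)%type.

Definition l1dist (x y : Z2) : nat := (`|x.1 - y.1| + `|x.2 - y.2|)%N.

(* Points of the torus T_{n,n} = Z^2/(nZ x nZ).  'Z_n is Z/nZ for n >= 2
   (the theorem's hypotheses force n >= 2). *)
Definition Tnn (n : nat) := ('Z_n * 'Z_n)%type.

Definition pi_n (n : nat) (x : Z2) : Tnn n := ((x.1)%:~R, (x.2)%:~R)%R.

Definition torus_dist_is (n : nat) (p q : Tnn n) (d : nat) : Prop :=
  (exists x' y', pi_n n x' = p /\ pi_n n y' = q /\ l1dist x' y' = d) /\
  (forall x' y', pi_n n x' = p -> pi_n n y' = q -> (d <= l1dist x' y')%N).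

Definition VR_Z2_simplex (r : nat) (s : {fset Z2}) : Prop :=
  s != fset0 /\ forall x y, x \in s -> y \in s -> (l1dist x y <= r)%N.

Definition VR_Z2_maximal (r : nat) (s : {fset Z2}) : Prop :=
  VR_Z2_simplex r s /\
  forall t, VR_Z2_simplex r t -> s `<=` t -> t = s.

Definition VR_T_simplex (n r : nat) (s : {fset Tnn n}) : Prop :=
  s != fset0 /\
  forall p q d, p \in s -> q \in s -> torus_dist_is n p q d -> (d <= r)%N.

Definition VR_T_maximal (n r : nat) (s : {fset Tnn n}) : Prop :=
  VR_T_simplex n r s /\
  forall t, VR_T_simplex n r t -> s `<=` t -> t = s.

Definition pi_n_set (n : nat) (s : {fset Z2}) : {fset Tnn n} :=
  [fset pi_n n x | x in s].

(* Main.v *)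
Require Import Defs.
From mathcomp Require Import all_boot all_order all_algebra.
From mathcomp Require Import finmap.
From mathcomp Require Import zify.
From Stdlib Require Import Classical.
Import GRing.Theory Num.Theory.

Local Open Scope ring_scope.

Lemma Zp_int0 (p : nat) (c : int) : (1 < p)%N ->
  ((c%:~R : 'Z_p) = 0) <-> (p%:Z %| c)%Z.
Proof.
move=> p1.
have p0 : (p%:Z != 0) by lia.
have E : (c%:~R : 'Z_p) = ((absz (c %% p)%Z)%:R : 'Z_p).
  rewrite {1}(divz_eq c p) intrD intrM.
  have -> : ((p%:Z)%:~R : 'Z_p) = 0 by exact: pchar_Zp.
  rewrite mulr0 add0r.
  have h : (0 <= (c %% p)%Z) by apply: modz_ge0.
  have -> : (c %% p)%Z = (absz (c%%p)%Z)%:Z by lia.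
  by [].
rewrite E; split.
- move=> h0. have := congr1 (@nat_of_ord _) h0.
  rewrite (val_Zp_nat p1) /= modn_small; last first.
    have := ltz_pmod c (_ : 0 < p%:Z). lia.
  move=> h. apply/dvdz_mod0P. lia.
- move/dvdz_mod0P => ->. by rewrite /= mulr0n.
Qed.

Lemma Zp_int_eq (p : nat) (a b : int) : (1 < p)%N ->
  ((a%:~R : 'Z_p) = b%:~R) <-> (p%:Z %| a - b)%Z.
Proof.
move=> p1; rewrite -Zp_int0 // intrB; split; first by move=> ->; rewrite subrr.
by move/eqP; rewrite subr_eq0 => /eqP.
Qed.

Lemma pi_eq (n : nat) (x y : Z2) : (1 < n)%N ->
  pi_n n x = pi_n n y <-> (n%:Z %| x.1 - y.1)%Z /\ (n%:Z %| x.2 - y.2)%Z.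
Proof.
move=> n1; rewrite /pi_n; split.
- by case=> /(Zp_int_eq _ _ _ n1) h1 /(Zp_int_eq _ _ _ n1) h2.
- by case=> /(Zp_int_eq _ _ _ n1) -> /(Zp_int_eq _ _ _ n1) ->.
Qed.

Lemma Zp_lift (n : nat) (x : 'Z_n) : (1 < n)%N ->
  (((nat_of_ord x)%:Z)%:~R : 'Z_n) = x.
Proof.
move=> n1; apply: val_inj.
change (nat_of_ord ((nat_of_ord x)%:R : 'Z_n) = nat_of_ord x).
rewrite (val_Zp_nat n1) modn_small //.
have := ltn_ord x; have := Zp_cast n1; lia.
Qed.

Lemma pi_surj (n : nat) (p : Tnn n) : (1 < n)%N -> exists x, pi_n n x = p.
Proof.
move=> n1; case: p => p1 p2.
exists ((nat_of_ord p1)%:Z, (nat_of_ord p2)%:Z).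
by rewrite /pi_n /= !Zp_lift.
Qed.

Lemma ex_min (P : nat -> Prop) : (exists m, P m) ->
  exists m, P m /\ forall j, P j -> (m <= j)%N.
Proof.
move=> [m Pm]; elim/ltn_ind: m Pm => m IH Pm.
case: (classic (exists j, P j /\ (j < m)%N)) => [[j [Pj ljm]] | H].
- exact: IH j ljm Pj.
- exists m; split=> // j Pj; rewrite leqNgt; apply/negP => ljm; apply: H; eauto.
Qed.

Lemma td_ex (n : nat) (p q : Tnn n) : (1 < n)%N -> exists d, torus_dist_is n p q d.
Proof.
move=> n1.
have [x px] := pi_surj n p n1; have [y qy] := pi_surj n q n1.
have [d [[x' [y' [h1 [h2 h3]]]] hmin]] :=
  @ex_min (fun d => exists x' y', pi_n n x' = p /\ pi_n n y' = q /\ l1dist x' y' = d)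
    (ex_intro _ (l1dist x y) (ex_intro _ x (ex_intro _ y (conj px (conj qy erefl))))).
exists d; split; first by exists x', y'.
move=> x0 y0 h0 h0'; apply: hmin; by exists x0, y0.
Qed.

Definition mult_fact (N A : int) :=
  A = 0 \/ A = N \/ A = - N \/ 2 * N <= A \/ A <= - (2 * N).

Lemma dvd_mult_fact (n : nat) (c : int) : (n%:Z %| c)%Z -> mult_fact n c.
Proof.
move/dvdzP => [q ->]; rewrite /mult_fact.
have : q = 0 \/ q = 1 \/ q = -1 \/ 2 <= q \/ q <= -2 by lia.
case=> [->|[->|[->|[h|h]]]]; try by [left; rewrite mul0r | right; left; rewrite mul1r |
  right; right; left; rewrite mulN1r].
- right; right; right; left. nia.
- right; right; right; right. nia.
Qed.

Definition near (K : int) (x y : int * int) : Prop :=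
  (- K <= x.1 + x.2 - (y.1 + y.2) /\ x.1 + x.2 - (y.1 + y.2) <= K) /\
  (- K <= x.1 - x.2 - (y.1 - y.2) /\ x.1 - x.2 - (y.1 - y.2) <= K).

Lemma l1near (x y : Z2) (K : nat) : leq (l1dist x y) K <-> near K%:Z x y.
Proof. case: x y => [x1 x2] [y1 y2]; rewrite /l1dist /near /=. lia. Qed.

Lemma l1sym (x y : Z2) : l1dist x y = l1dist y x.
Proof. case: x y => [x1 x2] [y1 y2]; rewrite /l1dist /=. lia. Qed.

Lemma l1refl (x : Z2) : l1dist x x = 0%N.
Proof. case: x => [x1 x2]; rewrite /l1dist /=. lia. Qed.

Lemma geo_delta (K N : int) (z1 z2 a1 a2 b1 b2 A B : int) :
  0 <= K -> 2 * K + 2 <= N ->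
  near K (z1, z2) (a1, a2) ->
  near K (a1, a2) (b1, b2) ->
  ~ near K (z1, z2) (b1, b2) ->
  near K (z1 + A, z2 + B) (b1, b2) ->
  mult_fact N A -> mult_fact N B ->
  (A = N /\ B = 0) \/ (A = - N /\ B = 0) \/ (A = 0 /\ B = N) \/ (A = 0 /\ B = - N).
Proof.
rewrite /near /mult_fact /= => *.
intuition (subst; lia).
Qed.

Lemma geo_i (K N : int) (z1 z2 a1 a2 b1 b2 A B h r mx s1 s2 : int) :
  0 <= K -> 2 * K + 2 <= N ->
  near K (z1, z2) (a1, a2) ->
  near K (a1, a2) (b1, b2) ->
  near K (z1 + A, z2 + B) (b1, b2) ->
  (A = N /\ B = 0) \/ (A = - N /\ B = 0) \/ (A = 0 /\ B = N) \/ (A = 0 /\ B = - N) ->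
  a1 - a2 + b1 + b2 = 2 * h + r -> 0 <= r <= 1 ->
  (a1 - a2 <= b1 - b2 /\ mx = h + r \/ b1 - b2 < a1 - a2 /\ mx = h) ->
  near K (s1, s2) (a1, a2) -> near K (s1, s2) (b1, b2) ->
  near K (s1, s2) (mx, b1 + b2 - mx).
Proof.
rewrite /near /= => *.
intuition (subst; lia).
Qed.

Lemma geo_ii (K N : int) (z1 z2 a1 a2 b1 b2 A B h r mx C D : int) :
  0 <= K -> 2 * K + 2 <= N ->
  near K (z1, z2) (a1, a2) ->
  near K (a1, a2) (b1, b2) ->
  near K (z1 + A, z2 + B) (b1, b2) ->
  (A = N /\ B = 0) \/ (A = - N /\ B = 0) \/ (A = 0 /\ B = N) \/ (A = 0 /\ B = - N) ->
  a1 - a2 + b1 + b2 = 2 * h + r -> 0 <= r <= 1 ->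
  (a1 - a2 <= b1 - b2 /\ mx = h + r \/ b1 - b2 < a1 - a2 /\ mx = h) ->
  mult_fact N C -> mult_fact N D ->
  ~ near K (z1 + C, z2 + D) (mx, b1 + b2 - mx).
Proof.
rewrite /near /mult_fact /= => *.
intuition (subst; lia).
Qed.

Lemma lift_near (n k : nat) (t : {fset Tnn n}) (p : Tnn n) (x : Z2) :
  (1 < n)%N -> VR_T_simplex n k t -> p \in t -> pi_n n x \in t ->
  exists w, pi_n n w = p /\ leq (l1dist w x) k.
Proof.
move=> n1 [_ ht] pt xt.
have [d hd] := td_ex n p (pi_n n x) n1.
have dk := ht _ _ _ pt xt hd.
case: hd => [[x' [y' [h1 [h2 h3]]]] _].
exists (x'.1 + (x.1 - y'.1), x'.2 + (x.2 - y'.2)); split.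
- rewrite -h1; apply/pi_eq => //=.
  have /(pi_eq _ _ _ n1) [d1 d2] := esym h2.
  have -> : x'.1 + (x.1 - y'.1) - x'.1 = x.1 - y'.1 by lia.
  have -> : x'.2 + (x.2 - y'.2) - x'.2 = x.2 - y'.2 by lia.
  by [].
- have -> : l1dist (x'.1 + (x.1 - y'.1), x'.2 + (x.2 - y'.2)) x = l1dist x' y'.
    rewrite /l1dist /=; lia.
  by rewrite h3.
Qed.

Lemma add_pt (k : nat) (sigma : {fset Z2}) (y : Z2) :
  VR_Z2_maximal k sigma -> (forall s, s \in sigma -> leq (l1dist y s) k) ->
  y \in sigma.
Proof.
move=> [[sne sd] smax] hy.
have E : (y |` sigma)%fset = sigma.
  apply: smax; last exact: fsubsetUr.
  split; first by apply/fset0Pn; exists y; exact: fset1U1.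
  move=> a b; rewrite !in_fset1U => /orP[/eqP-> | ha] /orP[/eqP-> | hb].
  - by rewrite l1refl.
  - exact: hy.
  - by rewrite l1sym; apply: hy.
  - exact: sd.
by rewrite -E fset1U1.
Qed.

Arguments geo_delta {K N z1 z2 a1 a2 b1 b2 A B}.
Arguments geo_i {K N z1 z2 a1 a2 b1 b2 A B h r mx s1 s2}.
Arguments geo_ii {K N z1 z2 a1 a2 b1 b2 A B h r mx C D}.
Arguments dvd_mult_fact {n c}.
Arguments add_pt {k sigma y}.

Theorem lemma5p2 (k n : nat) (sigma : {fset Z2}) :
  (2 * k + 1 < n)%N ->
  VR_Z2_maximal k sigma ->
  VR_T_maximal n k (pi_n_set n sigma).
Proof.
move=> hn smaxf.
have n1 : (1 < n)%N by lia.
have Ksz : (0 <= k%:Z) by lia.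
have KN : 2 * k%:Z + 2 <= n%:Z by lia.
have [[sne sd] smax] := smaxf.
have simp : VR_T_simplex n k (pi_n_set n sigma).
  split.
  - case/fset0Pn: sne => x xs; apply/fset0Pn; exists (pi_n n x); exact: in_imfset.
  - move=> p q d /imfsetP [x xs ->] /imfsetP [y ys ->] [_ hm].
    exact: leq_trans (hm x y erefl erefl) (sd x y xs ys).
split=> // t tsimp sub.
apply/eqP; rewrite eqEfsubset sub andbT; apply/fsubsetP => p pt.
have inT : forall x, x \in sigma -> pi_n n x \in t.
  by move=> x xs; apply: (fsubsetP sub); exact: in_imfset.
case/fset0Pn: sne => x0 x0s.
have [z [pz hz]] := lift_near _ _ _ _ _ n1 tsimp pt (inT _ x0s).
have claim : forall x, x \in sigma -> leq (l1dist z x) k.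
  move=> x1 x1s; apply: contraT => bad.
  have [w [pw hw]] := lift_near _ _ _ _ _ n1 tsimp pt (inT _ x1s).
  have /(pi_eq _ _ _ n1) [dA dB] : pi_n n w = pi_n n z by rewrite pw pz.
  have mA := dvd_mult_fact dA; have mB := dvd_mult_fact dB.
  have hza := (l1near _ _ _).1 hz.
  have hab := (l1near _ _ _).1 (sd x0 x1 x0s x1s).
  have hzb : ~ near k z x1.
    by move=> H; rewrite ((l1near _ _ _).2 H) in bad.
  have hwb : near k (z.1 + (w.1 - z.1), z.2 + (w.2 - z.2)) x1.
    have e1 : z.1 + (w.1 - z.1) = w.1 by lia.
    have e2 : z.2 + (w.2 - z.2) = w.2 by lia.
    rewrite e1 e2; exact: ((l1near _ _ _).1 hw).
  have hdel := geo_delta Ksz KN hza hab hzb hwb mA mB.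
  set P := x0.1 - x0.2 + x1.1 + x1.2.
  have hP : P = 2 * (P %/ 2)%Z + (P %% 2)%Z.
    have := divz_eq P 2; lia.
  have hr : 0 <= (P %% 2)%Z <= 1.
    have := modz_ge0 P (_ : 2 != 0); have := ltz_pmod P (_ : 0 < 2); lia.
  set h := (P %/ 2)%Z in hP; set r := (P %% 2)%Z in hP hr.
  set mx := if x0.1 - x0.2 <= x1.1 - x1.2 then h + r else h.
  have hmx : (x0.1 - x0.2 <= x1.1 - x1.2 /\ mx = h + r \/
              x1.1 - x1.2 < x0.1 - x0.2 /\ mx = h).
    rewrite /mx; case: ifP => H; [left | right]; split => //.
    lia.
  have msig : (mx, x1.1 + x1.2 - mx) \in sigma.
    apply: add_pt smaxf _ => s ss; rewrite l1sym; apply/l1near.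
    exact: (geo_i Ksz KN hza hab hwb hdel hP hr hmx
              ((l1near _ _ _).1 (sd s x0 ss x0s))
              ((l1near _ _ _).1 (sd s x1 ss x1s))).
  have [w' [pw' hw']] := lift_near _ _ _ _ _ n1 tsimp pt (inT _ msig).
  have /(pi_eq _ _ _ n1) [dC dD] : pi_n n w' = pi_n n z by rewrite pw' pz.
  have mC := dvd_mult_fact dC; have mD := dvd_mult_fact dD.
  exfalso; apply: (geo_ii Ksz KN hza hab hwb hdel hP hr hmx mC mD).
  have e1 : z.1 + (w'.1 - z.1) = w'.1 by lia.
  have e2 : z.2 + (w'.2 - z.2) = w'.2 by lia.
  rewrite e1 e2; exact: ((l1near _ _ _).1 hw').
have zs : z \in sigma by apply: add_pt smaxf claim.
by rewrite -pz; exact: in_imfset.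
Qed.
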